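(* Let $A$ be a $\mathbb{U}$-poset, $r,s\in\mathbb{I}$, $u,v\in\mathbb{U}$, $a,b,c\in A$. Then: (a) if $r\le s$ and $a\le_r b$ then $a\le_s b$; (b) $a\le_0 b$ iff $a\le b$; (c) if $a\le_r b$ and $b\le_s c$ then $a\le_{r\dotplus s}c$; (d) $\rho(a,a)=0$ and $\rho(a,b)+\rho(b,c)\ge\rho(a,c)$, so $\rho$ is a pseudoquasimetric and $\mathrm{dist}$ is a pseudometric; (e) if $u(t\dotplus r)\le v(t)\dotplus s$ for all $t\in\mathbb{I}$ and $a\le_r b$, then $u(a)\le_s v(b)$; consequently $\rho(u(a),v(a))\le\bigvee_{t\in\mathbb{I}}(u(t)\dotminus v(t))$, and if $\mu:\mathbb{I}\to\mathbb{I}$ satisfies $u(t)\dotminus u(t')\le\mu(t\dotminus t')$ for all $t,t'\in\mathbb{I}$, then $\rho(u(a),u(b))\le\mu(\rho(a,b))$ for all $a,b\in A$; (f) if $u^\times(t\dotplus r)\le v(t)\dotplus s$ for all $t\in\mathbb{I}$, where $u^\times$ is the right adjoint of $u$, and $u(a)\le_r b$, then $a\le_s v(b)$. Moreover, if $A$ is a $\mathbb{U}$-$\Psi^{\mathrm{op}}$-inflattice, then (g) for every upper subset $\psi\subseteq A$ with $\psi^{\mathrm{op}}\in\Psi$ (so $\bigwedge\psi$ exists): $a\le_r\bigwedge\psi$ iff $a\le_r b$ for all $b\in\psi$; consequently for two such $\psi,\psi'$, $\rho(\bigwedge\psi,\bigwedge\psi')\le\bigwedge_{a\in\psi}\bigv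ee_{b\in\psi'}\rho(a,b)$.
   Context: $\mathbb{I}=[0,1]$; $\dotplus,\dotminus$ are truncated addition and subtraction on $\mathbb{I}$. $\mathbb{U}$ is the monoid of surjective monotone maps $\mathbb{I}\to\mathbb{I}$; for $u\in\mathbb{U}$, $u^\times(y)=\max\{x\mid u(x)\le y\}$ is its right adjoint. A $\mathbb{U}$-poset is a poset with a $\mathbb{U}$-action monotone in both variables. $a\le_r b$ iff for all $u,v\in\mathbb{U}$ with $u(t\dotplus r)\le v(t)$ for all $t$, $u(a)\le v(b)$; $\rho(a,b)=\bigwedge\{r\mid a\le_r b\}$; $\mathrm{dist}(a,b)=\rho(a,b)\vee\rho(b,a)$. Standing assumption: $\Phi,\Psi$ are join doctrines (classes of posets containing the one-element poset, closed under unions $\bigcup\mathcal{S}$ of sets $\mathcal{S}$ of subposets in the class with $\mathcal{S}$ (by inclusion) in the class, under codomains of monotone maps with cofinal image, and under cofinal subposets), $\omega\in\Phi$, and $\Phi$ is sound dual to $\Psi^{\mathrm{op}}$: for all posets $X,Y$, lower sets $\phi\subseteq Y$ in $\Phi$, lower sets $\psi\subseteq X$ in $\Psi$, and monotone $F:X^{\mathrm{op}}\times Y\to2$, $\bigwedge_{x\in\psi}\bigvee_{y\in\phi}F=\bigvee_{y\in\phi}\bigwedge_{x\in\psi}F$, and for every poset $X$ the lattice of lower sets of $X$ is the closure of the lower sets in $\Psi$ under unions of subfamilies belonging to $\Phi$. A $\Psi^{\mathrm{op}}$-meet is a meet of a subset $S$ with $S^{\mathrm{op}}\in\Psi$; a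 $\mathbb{U}$-$\Psi^{\mathrm{op}}$-inflattice is a $\mathbb{U}$-poset with all $\Psi^{\mathrm{op}}$-meets, each $u$ acting by a $\Psi^{\mathrm{op}}$-meet-preserving map. *)

(* Defs.v *)
From HB Require Import structures.
From mathcomp Require Import all_boot all_order all_algebra.
From mathcomp Require Import boolp classical_sets reals.
Set Implicit Arguments. Unset Strict Implicit. Unset Printing Implicit Defensive.
Import Order.TTheory GRing.Theory Num.Theory.
Local Open Scope ring_scope.
Local Open Scope classical_set_scope.

Section UnitInterval.
Variable R : realType.

Definition inI (x : R) : bool := (0 <= x) && (x <= 1).
Definition I := {x : R | inI x}.

Lemma clampI_proof (x : R) : inI (Num.min (Num.max x 0) 1).
Proof.
rewrite /inI; apply/andP; split.
- by rewrite le_min ler01 le_max lexx orbT.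
- by rewrite ge_min lexx orbT.
Qed.

Definition clampI (x : R) : I := @exist R (fun y => inI y) _ (clampI_proof x).

Definition I0 : I := clampI 0.
Definition tadd (x y : I) : I := clampI (sval x + sval y).
Definition tsub (x y : I) : I := clampI (sval x - sval y).

Record Umap := UMap {
  ufun :> I -> I;
  ufun_mono : forall x y : I, sval x <= sval y -> sval (ufun x) <= sval (ufun y);
  ufun_surj : forall y : I, exists x : I, ufun x = y }.

Definition idU : Umap := @UMap id (fun x y h => h) (fun y => ex_intro _ y erefl).

Lemma compU_mono (u v : Umap) (x y : I) :
  sval x <= sval y -> sval (u (v x)) <= sval (u (v y)).
Proof. by move=> h; apply: ufun_mono; apply: ufun_mono. Qed.

Lemma compU_surj (u v : Umap) (y : I) : exists x : I, u (v x) = y.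
Proof.
have [z <-] := ufun_surj u y; have [x <-] := ufun_surj v z; by exists x.
Qed.

Definition compU (u v : Umap) : Umap :=
  @UMap (fun t => u (v t)) (@compU_mono u v) (@compU_surj u v).

(* Supremum / infimum in the complete lattice I of a set of reals
   (empty sup = 0, empty inf = 1, the bottom/top of I). *)
Definition Isup (S : set R) : R := if pselect (S = set0) then 0 else sup S.
Definition Iinf (S : set R) : R := if pselect (S = set0) then 1 else inf S.

(* right adjoint u^x(y) = max {x | u(x) <= y} (this max exists; it is the sup) *)
Definition uadj (u : Umap) (y : I) : I :=
  clampI (sup [set sval x | x in [set x : I | sval (u x) <= sval y]]).

Section Posets.
Variables (A : Type) (le : A -> A -> Prop).

Definition is_poset : Prop :=
  (forall a, le a a) /\ (forall a b c, le a b -> le b c -> le a c) /\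
  (forall a b, le a b -> le b a -> a = b).

Definition is_lower (S : A -> Prop) : Prop := forall x y, le x y -> S y -> S x.
Definition is_upper (S : A -> Prop) : Prop := forall x y, le x y -> S x -> S y.

Definition is_glb (S : A -> Prop) (m : A) : Prop :=
  (forall x, S x -> le m x) /\ (forall y, (forall x, S x -> le y x) -> le y m).

Variable act : Umap -> A -> A.

Definition is_Uposet : Prop :=
  is_poset /\
  (forall a, act idU a = a) /\
  (forall u v a, act (compU u v) a = act u (act v a)) /\
  (forall (u v : Umap) a, (forall t, sval (u t) <= sval (v t)) -> le (act u a) (act v a)) /\
  (forall u a b, le a b -> le (act u a) (act u b)).

Definition le_r (r : I) (a b : A) : Prop :=
  forall u v : Umap, (forall t : I, sval (u (tadd t r)) <= sval (v t)) ->
    le (act u a) (act v b).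

Definition rho (a b : A) : I :=
  clampI (Iinf [set sval r | r in [set r : I | le_r r a b]]).

Definition dist (a b : A) : R := Num.max (sval (rho a b)) (sval (rho b a)).

End Posets.
End UnitInterval.

Definition PosetClass := forall T : Type, (T -> T -> Prop) -> Prop.

Definition subposet_in (K : PosetClass) (T : Type) (le : T -> T -> Prop)
  (S : T -> Prop) : Prop :=
  K {x : T | S x} (fun x y => le (proj1_sig x) (proj1_sig y)).

Definition opsubposet_in (K : PosetClass) (T : Type) (le : T -> T -> Prop)
  (S : T -> Prop) : Prop :=
  K {x : T | S x} (fun x y => le (proj1_sig y) (proj1_sig x)).

Definition family_in (K : PosetClass) (T : Type) (F : (T -> Prop) -> Prop) : Prop :=
  K {S : T -> Prop | F S} (fun S S' => forall x, proj1_sig S x -> proj1_sig S' x).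

Definition bigunion (T : Type) (F : (T -> Prop) -> Prop) : T -> Prop :=
  fun x => exists2 S, F S & S x.

Definition join_doctrine (K : PosetClass) : Prop :=
  K unit (fun _ _ => True) /\
  (forall (T : Type) (le : T -> T -> Prop) (F : (T -> Prop) -> Prop),
     is_poset le -> (forall S, F S -> subposet_in K le S) -> family_in K F ->
     subposet_in K le (bigunion F)) /\
  (forall (X Y : Type) (leX : X -> X -> Prop) (leY : Y -> Y -> Prop) (f : X -> Y),
     is_poset leX -> is_poset leY -> (forall x x', leX x x' -> leY (f x) (f x')) ->
     (forall y, exists x, leY y (f x)) -> K X leX -> K Y leY) /\
  (forall (T : Type) (le : T -> T -> Prop) (S : T -> Prop),
     is_poset le -> K T le -> (forall x, exists2 s, S s & le x s) ->
     subposet_in K le S).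

Definition sound_dual (Phi Psi : PosetClass) : Prop :=
  (forall (X Y : Type) (leX : X -> X -> Prop) (leY : Y -> Y -> Prop)
          (phi : Y -> Prop) (psi : X -> Prop) (F : X -> Y -> bool),
     is_poset leX -> is_poset leY ->
     is_lower leY phi -> subposet_in Phi leY phi ->
     is_lower leX psi -> subposet_in Psi leX psi ->
     (forall x x' y y', leX x' x -> leY y y' -> F x y -> F x' y') ->
     ((forall x, psi x -> exists2 y, phi y & F x y) <->
      (exists2 y, phi y & forall x, psi x -> F x y))) /\
  (* the lower sets of X form the closure of the Psi-lower sets under
     unions of subfamilies belonging to Phi *)
  (forall (X : Type) (leX : X -> X -> Prop), is_poset leX ->
     forall L, is_lower leX L ->
     forall C : (X -> Prop) -> Prop,
       (forall psi, is_lower leX psi -> subposet_in Psi leX psi -> C psi) ->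
       (forall F : (X -> Prop) -> Prop, (forall S, F S -> C S) ->
          family_in Phi F -> C (bigunion F)) ->
       C L).

Definition is_Uinflattice (R : realType) (Psi : PosetClass) (A : Type)
  (le : A -> A -> Prop) (act : Umap R -> A -> A) : Prop :=
  is_Uposet le act /\
  (forall S : A -> Prop, opsubposet_in Psi le S -> exists m, is_glb le S m) /\
  (forall (u : Umap R) (S : A -> Prop) (m : A), opsubposet_in Psi le S ->
     is_glb le S m -> is_glb le (fun y => exists2 x, S x & y = act u x) (act u m)).

(* Main.v *)
Require Import Defs.
From HB Require Import structures.
From mathcomp Require Import all_boot all_order all_algebra.
From mathcomp Require Import boolp classical_sets reals.
From mathcomp Require Import lra.
Import Order.TTheory GRing.Theory Num.Theory.
Local Open Scope ring_scope.
Local Open Scope classical_set_scope.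
Set Implicit Arguments. Unset Strict Implicit. Unset Printing Implicit Defensive.

Section Basic.
Variable R : realType.
Implicit Types (x y z : R).

Lemma eqI (p q : I R) : sval p = sval q -> p = q.
Proof. by case: p => p hp; case: q => q hq /= epq; subst; congr exist; apply: bool_irrelevance. Qed.

Lemma I_ge0 (p : I R) : 0 <= sval p.
Proof. by case: p => p /= /andP[]. Qed.
Lemma I_le1 (p : I R) : sval p <= 1.
Proof. by case: p => p /= /andP[]. Qed.

Lemma clampE x : sval (clampI x) = Num.min (Num.max x 0) 1.
Proof. by []. Qed.

Lemma clamp_id x : 0 <= x -> x <= 1 -> sval (clampI x) = x.
Proof. by move=> h0 h1; rewrite clampE; rewrite (max_idPl h0) (min_idPl h1). Qed.

Lemma clamp_ge x y : y <= 1 -> (y <= 0 \/ y <= x) -> y <= sval (clampI x).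
Proof.
move=> h1 h; rewrite clampE le_min h1 andbT le_max.
by case: h => ->; rewrite ?orbT.
Qed.

Lemma clamp_le x z : (1 <= z \/ (0 <= z /\ x <= z)) -> sval (clampI x) <= z.
Proof.
rewrite clampE ge_min ge_max; case=> [->|[-> ->]] //; by rewrite ?orbT.
Qed.

Lemma uval0 (u : Umap R) : sval (u (I0 R)) = 0.
Proof.
have [x hx] := ufun_surj u (I0 R).
apply/eqP; rewrite eq_le I_ge0 andbT.
have : sval (u (I0 R)) <= sval (u x) by apply: ufun_mono; rewrite clamp_id ?lexx ?ler01 // I_ge0.
by rewrite hx clamp_id ?lexx ?ler01.
Qed.

Definition I1 : I R := clampI 1.

Lemma uval1 (u : Umap R) : sval (u I1) = 1.
Proof.
have [x hx] := ufun_surj u I1.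
apply/eqP; rewrite eq_le I_le1 /=.
have : sval (u x) <= sval (u I1) by apply: ufun_mono; rewrite clamp_id ?lexx ?ler01 // I_le1.
by rewrite hx clamp_id ?lexx ?ler01.
Qed.

Lemma u_ltI (u : Umap R) (p q : I R) : sval (u p) < sval (u q) -> sval p < sval q.
Proof.
move=> h; rewrite ltNge; apply/negP => /(ufun_mono u) h'.
by move: h; rewrite ltNge h'.
Qed.

End Basic.

Section Arith.
Variable R : realType.
Lemma min_case (x : R) : (Num.min x 1 = x /\ x <= 1) \/ (Num.min x 1 = 1 /\ 1 < x).
Proof. case: (leP x 1) => h; [left; split => //; exact/min_idPl | right; split => //; apply/min_idPr/ltW]. Qed.
Lemma max_case (x : R) : (Num.max x 0 = x /\ 0 <= x) \/ (Num.max x 0 = 0 /\ x < 0).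
Proof. case: (leP 0 x) => h; [left; split => //; exact/max_idPl | right; split => //; apply/max_idPr/ltW]. Qed.

Lemma tadd_val (p q : I R) : sval (tadd p q) = Num.min (sval p + sval q) 1.
Proof. rewrite /tadd clampE; congr Num.min; apply/max_idPl; by rewrite addr_ge0 ?I_ge0. Qed.

Lemma tsub_val (p q : I R) : sval (tsub p q) = Num.max (sval p - sval q) 0.
Proof. rewrite /tsub clampE; apply/min_idPl; rewrite ge_max ler01 andbT.
have := I_le1 p; have := I_ge0 q; lra. Qed.

Lemma I0_val : sval (I0 R) = 0.
Proof. by rewrite clamp_id ?lexx ?ler01. Qed.
Lemma I1_val : sval (I1 R) = 1.
Proof. by rewrite clamp_id ?lexx ?ler01. Qed.

Lemma tadd_0 (t : I R) : tadd t (I0 R) = t.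
Proof. apply: eqI; rewrite tadd_val I0_val addr0; apply/min_idPl; exact: I_le1. Qed.

Lemma tadd_mono (t t' r s : I R) : sval t <= sval t' -> sval r <= sval s ->
  sval (tadd t r) <= sval (tadd t' s).
Proof.
move=> h1 h2; rewrite !tadd_val.
case: (min_case (sval t + sval r)) => [[-> ?]|[-> ?]];
case: (min_case (sval t' + sval s)) => [[-> ?]|[-> ?]]; lra.
Qed.

Lemma tsub_mono (t t' r : I R) : sval t <= sval t' ->
  sval (tsub t r) <= sval (tsub t' r).
Proof.
move=> h1; rewrite !tsub_val.
case: (max_case (sval t - sval r)) => [[-> ?]|[-> ?]];
case: (max_case (sval t' - sval r)) => [[-> ?]|[-> ?]]; lra.
Qed.

Lemma tadd_assoc (t r s : I R) : tadd (tadd t s) r = tadd t (tadd r s).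
Proof.
apply: eqI; rewrite !tadd_val.
have := I_ge0 t; have := I_ge0 s; have := I_ge0 r.
case: (min_case (sval t + sval s)) => [[-> ?]|[-> ?]];
case: (min_case (sval r + sval s)) => [[-> ?]|[-> ?]];
try case: (min_case (sval t + sval s + sval r)) => [[-> ?]|[-> ?]];
try case: (min_case (1 + sval r)) => [[-> ?]|[-> ?]];
try case: (min_case (sval t + (sval r + sval s))) => [[-> ?]|[-> ?]];
try case: (min_case (sval t + 1)) => [[-> ?]|[-> ?]]; lra.
Qed.
Lemma tadd_ger (t r : I R) : sval r <= sval (tadd t r).
Proof. rewrite tadd_val; have := I_ge0 t; have := I_le1 r.
case: (min_case (sval t + sval r)) => [[-> ?]|[-> ?]]; lra. Qed.
Lemma tadd_gel (t r : I R) : sval t <= sval (tadd t r).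
Proof. rewrite tadd_val; have := I_ge0 r; have := I_le1 t.
case: (min_case (sval t + sval r)) => [[-> ?]|[-> ?]]; lra. Qed.
Lemma tadd_le (t r : I R) : sval (tadd t r) <= sval t + sval r.
Proof. rewrite tadd_val; case: (min_case (sval t + sval r)) => [[-> ?]|[-> ?]]; lra. Qed.
End Arith.

Section IsupS.
Variable R : realType.
Lemma Isup_spec (S : set R) : (forall z, S z -> 0 <= z /\ z <= 1) ->
  0 <= Isup S /\ Isup S <= 1 /\ forall z, S z -> z <= Isup S.
Proof.
move=> hS; rewrite /Isup; destruct (pselect _) as [h|hne].
  split; first exact: lexx. split; first exact: ler01.
  by move=> z hz; exfalso; move: hz; rewrite h.
have [z0 hz0] : S !=set0 by apply/set0P/eqP.
have hub : has_ubound S by exists 1 => z /hS [].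
have hle : forall z, S z -> z <= sup S by move=> z hz; exact: ub_le_sup.
split; first by apply: le_trans (hle _ hz0); case: (hS _ hz0).
split; last exact: hle.
by apply: ge_sup; [exists z0 | move=> z /hS []].
Qed.
End IsupS.

Section UCsec.
Variable R : realType.

Lemma UC (u : Umap R) (e : R) : 0 < e -> exists2 d : R, 0 < d &
  forall t y : I R, sval y - sval t <= d -> sval (u y) <= sval (u t) + e.
Proof.
move=> he.
have he2 : 0 < e / 2 by lra.
have [k hk] := @ltr_add_invr R 0 (e / 2) he2.
rewrite add0r in hk.
set iN := k.+1%:R^-1 in hk.
have iN0 : 0 < iN by rewrite invr_gt0 ltr0Sn.
pose q (j : nat) : R := j%:R * iN.
have qS : forall j, q j.+1 = q j + iN.
  by move=> j; rewrite /q -addn1 natrD mulrDl mul1r.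
have q0 : q 0%N = 0 by rewrite /q mul0r.
have qN : q k.+1 = 1 by rewrite /q /iN mulfV // pnatr_eq0.
have qle : forall j, (j <= k.+1)%N -> 0 <= q j /\ q j <= 1.
  move=> j hj; split; first by rewrite /q mulr_ge0 ?ler0n // ltW.
  by rewrite -qN /q; apply: ler_wpM2r; [exact: ltW | rewrite ler_nat].
have hex : forall j : nat, exists x : I R, u x = clampI (q j) by move=> j; exact: ufun_surj.
have [x hx] := choice hex.
have hxv : forall j, (j <= k.+1)%N -> sval (u (x j)) = q j.
  by move=> j hj; rewrite hx; case: (qle j hj) => ? ?; exact: clamp_id.
have gap : forall j, (j < k.+1)%N -> sval (x j) < sval (x j.+1).
  move=> j hj; apply: (@u_ltI _ u); rewrite !hxv // ?qS; [lra | exact: ltnW].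
have [d hd0 hd] : exists2 d : R, 0 < d &
    forall j, (j < k.+1)%N -> d <= sval (x j.+1) - sval (x j).
  suff : forall n, (n <= k.+1)%N -> exists2 d : R, 0 < d &
      forall j, (j < n)%N -> d <= sval (x j.+1) - sval (x j) by apply; exact: leqnn.
  elim=> [|n IH] hn; first by exists 1 => //; exact: ltr01.
  have [d hd0 hd] := IH (ltnW hn).
  exists (Num.min d (sval (x n.+1) - sval (x n))).
  - by rewrite lt_min hd0 /= subr_gt0; exact: gap.
  - move=> j; rewrite ltnS leq_eqVlt => /orP [/eqP -> | hj].
    + by rewrite ge_min lexx orbT.
    + by rewrite ge_min (hd j hj).
exists d => // t y hyt.
have step : forall j, (j.+1 < k.+1)%N -> q j <= sval (u t) -> sval (u t) < q j.+1 ->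
    sval (u y) <= sval (u t) + 2 * iN.
  move=> j hj h1 h2.
  have h3 : sval t < sval (x j.+1) by apply: (@u_ltI _ u); rewrite hxv //; exact: ltnW.
  have h4 := hd j.+1 hj.
  have h5 : sval (u y) <= q j.+2 by rewrite -hxv //; apply: ufun_mono; lra.
  rewrite !qS in h5; rewrite qS in h2; lra.
have C : forall j, (j < k.+1)%N -> sval (u t) < q j -> sval (u y) <= sval (u t) + 2 * iN.
  elim=> [|j IH] hj h2.
  - by exfalso; move: h2; rewrite q0 ltNge I_ge0.
  - case: (ltP (sval (u t)) (q j)) => h1.
    + by apply: IH h1; exact: ltnW.
    + exact: step j hj h1 h2.
have fin : sval (u y) <= sval (u t) + 2 * iN.
  case: (ltP (sval (u t)) (q k)) => h.
  - exact: C k (ltnSn k) h.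
  - have := I_le1 (u y); have := qS k; rewrite qN; lra.
lra.
Qed.
End UCsec.

Unset Implicit Arguments.


Section Main.
Variables (R : realType) (A : Type) (le : A -> A -> Prop) (act : Umap R -> A -> A).
Hypothesis HA : is_Uposet le act.

Let refl : forall a, le a a. Proof. by case: HA => [[]]. Qed.
Let trans : forall {a b c}, le a b -> le b c -> le a c. Proof. by case: HA => [[_ []]]. Qed.
Let actid : forall a, act (idU R) a = a. Proof. by case: HA => _ []. Qed.
Let actcomp : forall u v a, act (compU u v) a = act u (act v a). Proof. by case: HA => _ [_ []]. Qed.
Let actmonoU : forall (u v : Umap R) a, (forall t, sval (u t) <= sval (v t)) -> le (act u a) (act v a).
Proof. by case: HA => _ [_ [_ []]]. Qed.
Let actmono : forall u {a b}, le a b -> le (act u a) (act u b). Proof. by case: HA => _ [_ [_ []]]. Qed.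

Notation ler := (le_r le act).
Notation rh := (rho le act).

Lemma part_a (r s : I R) a b : sval r <= sval s -> ler r a b -> ler s a b.
Proof.
move=> rs h u v huv; apply: h => t; apply: le_trans (huv t).
by apply: ufun_mono; apply: tadd_mono.
Qed.

Lemma part_b a b : ler (I0 R) a b <-> le a b.
Proof.
split.
- move=> h; rewrite -(actid a) -(actid b); apply: h => t; rewrite tadd_0; exact: lexx.
- move=> hab u v huv; apply: trans (actmono v hab); apply: actmonoU => t.
  by have := huv t; rewrite tadd_0.
Qed.

Lemma part_c (r s : I R) a b c : ler r a b -> ler s b c -> ler (tadd r s) a c.
Proof.
move=> hab hbc u v huv.
have ur0 : sval (u r) = 0.
  apply/eqP; rewrite eq_le I_ge0 andbT -(uval0 v).
  apply: le_trans (huv (I0 R)); apply: ufun_mono.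
  apply: le_trans (tadd_gel r s) (tadd_ger _ _).
have wmono : forall x y : I R, sval x <= sval y -> sval (u (tadd x r)) <= sval (u (tadd y r)).
  by move=> x y hxy; apply: ufun_mono; apply: tadd_mono.
have wsurj : forall y : I R, exists x : I R, u (tadd x r) = y.
  move=> y; have [x hx] := ufun_surj u y.
  case: (leP (sval r) (sval x)) => hrx.
  - exists (clampI (sval x - sval r)); rewrite -hx; congr (ufun u); apply: eqI.
    rewrite tadd_val clamp_id; last 2 first.
    + lra.
    + have := I_ge0 r; have := I_le1 x; lra.
    rewrite subrK; apply/min_idPl; exact: I_le1.
  - exists (I0 R).
    have hy : y = I0 R.
      apply: eqI; rewrite I0_val; apply/eqP; rewrite eq_le I_ge0 andbT -ur0 -hx.
      by apply: ufun_mono; apply: ltW.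
    rewrite hy; apply: eqI; rewrite I0_val.
    have -> : tadd (I0 R) r = r by apply: eqI; rewrite tadd_val I0_val add0r; apply/min_idPl; exact: I_le1.
    exact: ur0.
pose w := @UMap R (fun t => u (tadd t r)) wmono wsurj.
apply: (trans (hab u w _)); first by move=> t; exact: lexx.
apply: hbc => t /=; rewrite tadd_assoc; exact: huv.
Qed.

Lemma ler_one a b : ler (I1 R) a b.
Proof.
move=> u v huv; exfalso; have := huv (I0 R).
have -> : tadd (I0 R) (I1 R) = I1 R.
  by apply: eqI; rewrite tadd_val I0_val I1_val add0r; apply/min_idPl.
rewrite uval1 uval0; lra.
Qed.

Definition rset a b := [set sval r | r in [set r : I R | ler r a b]].

Lemma rset_ne a b : rset a b !=set0.
Proof. exists 1; exists (I1 R); [exact: ler_one | exact: I1_val]. Qed.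

Lemma rset_lb a b : lbound (rset a b) 0.
Proof. by move=> z [r _ <-]; exact: I_ge0. Qed.

Lemma rho_val a b : sval (rh a b) = inf (rset a b).
Proof.
rewrite /rho /Iinf; destruct (pselect _) as [h|hne].
  by exfalso; have [z hz] := rset_ne a b; move: hz; rewrite /rset h.
apply: clamp_id; first exact: lb_le_inf (rset_ne a b) (rset_lb a b).
apply: ge_inf; first by exists 0; exact: rset_lb.
by exists (I1 R); [exact: ler_one| exact: I1_val].
Qed.

Lemma rho_le r a b : ler r a b -> sval (rh a b) <= sval r.
Proof.
move=> h; rewrite rho_val; apply: ge_inf; first by exists 0; exact: rset_lb.
by exists r.
Qed.

Lemma rho_lt r a b : sval (rh a b) < sval r -> ler r a b.
Proof.
rewrite rho_val => /(inf_lt (rset_ne a b)) [z [r' hr' <-]] hlt.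
by apply: part_a hr'; apply: ltW.
Qed.

Lemma rho_ge0 a b : 0 <= sval (rh a b). Proof. exact: I_ge0. Qed.

Lemma rho_refl a : sval (rh a a) = 0.
Proof.
apply/eqP; rewrite eq_le rho_ge0 andbT -(I0_val R); apply: rho_le.
by apply/part_b.
Qed.

Lemma rho_tri a b c : sval (rh a c) <= sval (rh a b) + sval (rh b c).
Proof.
rewrite -lerBlDr [X in _ <= X]rho_val; apply: lb_le_inf; first exact: rset_ne.
move=> _ [r hr <-]; rewrite lerBlDr -lerBlDl [X in _ <= X]rho_val.
apply: lb_le_inf; first exact: rset_ne.
move=> _ [s hs <-]; rewrite lerBlDl.
exact: le_trans (rho_le _ _ _ (part_c _ _ _ _ _ hr hs)) (tadd_le _ _).
Qed.


Lemma dist_props a b c : dist le act a a = 0 /\ dist le act a b = dist le act b a /\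
     dist le act a c <= dist le act a b + dist le act b c.
Proof.
rewrite /dist; split; first by rewrite maxxx rho_refl.
split; first exact: maxC.
rewrite ge_max; apply/andP; split.
- apply: le_trans (rho_tri a b c) _; apply: lerD; by rewrite le_max lexx.
- apply: le_trans (rho_tri c b a) _; rewrite addrC; apply: lerD; by rewrite le_max lexx orbT.
Qed.

Lemma part_e (r s : I R) (u v : Umap R) a b :
  (forall t : I R, sval (u (tadd t r)) <= sval (tadd (v t) s)) ->
  ler r a b -> ler s (act u a) (act v b).
Proof.
move=> huv hab u' v' h'; rewrite -!actcomp; apply: hab => t /=.
apply: le_trans (h' (v t)); apply: ufun_mono; exact: huv.
Qed.


Lemma part_e2 (u v : Umap R) a :
  sval (rh (act u a) (act v a)) <= Isup (range (fun t : I R => sval (tsub (u t) (v t)))).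
Proof.
set S := range _.
have hS : forall z, S z -> 0 <= z /\ z <= 1.
  by move=> _ [t _ <-]; split; [exact: I_ge0|exact: I_le1].
have [h0 [h1 hub]] := Isup_spec hS.
have hM : sval (clampI (Isup S)) = Isup S := clamp_id h0 h1.
rewrite -hM; apply: rho_le; apply: (part_e (I0 R)); last by apply/part_b; exact: refl.
move=> t; rewrite tadd_0 tadd_val hM.
have ht : S (sval (tsub (u t) (v t))) by exists t.
have := hub _ ht; rewrite tsub_val.
have := I_le1 (u t); have := I_ge0 (v t).
case: (max_case (sval (u t) - sval (v t))) => [[-> ?]|[-> ?]];
case: (min_case (sval (v t) + Isup S)) => [[-> ?]|[-> ?]]; lra.
Qed.

Lemma part_f (r s : I R) (u v : Umap R) a b :
  (forall t : I R, sval (uadj u (tadd t r)) <= sval (tadd (v t) s)) ->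
  ler r (act u a) b -> ler s a (act v b).
Proof.
move=> hyp hab u' v' h'.
have uadj_ge : forall x y : I R, sval (u x) <= sval y -> sval x <= sval (uadj u y).
  move=> x y hxy; rewrite /uadj; apply: clamp_ge; first exact: I_le1.
  right; apply: ub_le_sup; last by exists x.
  by exists 1 => _ [z _ <-]; exact: I_le1.
pose tr := clampI (1 - sval r).
have tr_val : sval tr = 1 - sval r.
  by apply: clamp_id; have := I_ge0 r; have := I_le1 r; lra.
have vtr : 1 - sval s <= sval (v tr).
  have e1 : sval (tadd tr r) = 1.
    by rewrite tadd_val tr_val subrK; apply/min_idPl.
  have h1 : 1 <= sval (uadj u (tadd tr r)).
    by rewrite -(I1_val R); apply: uadj_ge; rewrite uval1 e1.
  have := le_trans h1 (hyp tr); rewrite tadd_val.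
  by case: (min_case (sval (v tr) + sval s)) => [[-> ?]|[-> ?]]; lra.
pose ts := clampI (1 - sval s).
have ts_val : sval ts = 1 - sval s.
  by apply: clamp_id; have := I_ge0 s; have := I_le1 s; lra.
have v'ts : 1 <= sval (v' ts).
  have e1 : tadd ts s = I1 R.
    by apply: eqI; rewrite tadd_val ts_val subrK I1_val; apply/min_idPl.
  by have := h' ts; rewrite e1 uval1.
have key : 1 <= sval (v' (v tr)).
  by apply: le_trans v'ts _; apply: ufun_mono; rewrite ts_val.
have wmono : forall x y : I R, sval x <= sval y ->
    sval (v' (v (tsub x r))) <= sval (v' (v (tsub y r))).
  by move=> x y hxy; do 2 apply: ufun_mono; apply: tsub_mono.
have wsurj : forall z : I R, exists x : I R, v' (v (tsub x r)) = z.
  move=> z; have [x hx] := ufun_surj v' z; have [p hp] := ufun_surj v x.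
  case: (leP (sval p) (1 - sval r)) => hpr.
  - exists (clampI (sval p + sval r)); rewrite -hx -hp; congr (ufun v' (ufun v _)).
    apply: eqI; rewrite tsub_val clamp_id; last 2 first.
    + by have := I_ge0 p; have := I_ge0 r; lra.
    + lra.
    by rewrite addrK; apply/max_idPl; exact: I_ge0.
  - exists (I1 R).
    have hz : sval z = 1.
      apply/eqP; rewrite eq_le I_le1 /=; apply: le_trans key _; rewrite -hx -hp.
      by do 2 apply: ufun_mono; rewrite tr_val; apply: ltW.
    apply: eqI; rewrite hz; apply/eqP; rewrite eq_le I_le1 /=; apply: le_trans key _.
    do 2 apply: ufun_mono; rewrite tsub_val I1_val tr_val.
    by case: (max_case (1 - sval r)) => [[-> ?]|[-> ?]]; lra.
pose w := @UMap R (fun y => v' (v (tsub y r))) wmono wsurj.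
apply: trans (actmonoU u' (compU w u) a _) _.
  move=> x; change (sval (u' x) <= sval (v' (v (tsub (u x) r)))).
  case: (leP (sval x) (sval s)) => hxs.
  - have h0 : sval (u' x) <= 0.
      rewrite -(uval0 v'); apply: le_trans (h' (I0 R)); apply: ufun_mono.
      exact: le_trans hxs (tadd_ger _ _).
    exact: le_trans h0 (I_ge0 _).
  - pose t := clampI (sval x - sval s).
    have t_val : sval t = sval x - sval s.
      by apply: clamp_id; have := I_ge0 s; have := I_le1 x; lra.
    have ex : tadd t s = x.
      by apply: eqI; rewrite tadd_val t_val subrK; apply/min_idPl; exact: I_le1.
    rewrite -[X in sval (u' X)]ex; apply: le_trans (h' t) _; apply: ufun_mono.
    rewrite t_val.
    have hx : sval x <= sval (uadj u (tadd (tsub (u x) r) r)).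
      apply: uadj_ge; rewrite tadd_val tsub_val.
      have := I_le1 (u x); have := I_ge0 r; have := I_ge0 (u x).
      case: (max_case (sval (u x) - sval r)) => [[-> ?]|[-> ?]];
      try case: (min_case (sval (u x) - sval r + sval r)) => [[-> ?]|[-> ?]];
      try case: (min_case (0 + sval r)) => [[-> ?]|[-> ?]]; lra.
    have := le_trans (le_trans hx (hyp _)) (tadd_le _ _); lra.
rewrite actcomp; apply: trans (hab w (compU v' v) _) _.
  move=> t; change (sval (v' (v (tsub (tadd t r) r))) <= sval (v' (v t))).
  do 2 apply: ufun_mono; rewrite tsub_val tadd_val.
  have := I_le1 t; have := I_ge0 r; have := I_ge0 t.
  case: (min_case (sval t + sval r)) => [[-> ?]|[-> ?]];
  try case: (max_case (sval t + sval r - sval r)) => [[-> ?]|[-> ?]];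
  try case: (max_case (1 - sval r)) => [[-> ?]|[-> ?]]; lra.
rewrite actcomp; exact: refl.
Qed.

Lemma part_g1 (Psi : PosetClass) (Hinf : is_Uinflattice Psi le act) (psi : A -> Prop) m :
  is_upper le psi -> opsubposet_in Psi le psi -> is_glb le psi m ->
  forall (r : I R) a, ler r a m <-> (forall b, psi b -> ler r a b).
Proof.
move=> hup hpsi [hlb hgl] r a; split.
- by move=> h b hb u v huv; apply: trans (h u v huv) (actmono v (hlb b hb)).
- move=> h u v huv; case: Hinf => _ [_ Hact].
  have [_ hg] := Hact v psi m hpsi (conj hlb hgl).
  by apply: hg => y [x hx ->]; exact: h x hx u v huv.
Qed.

Lemma rho_le_of a b (X : R) : 0 <= X -> (forall r : I R, X < sval r -> ler r a b) ->
  sval (rh a b) <= X.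
Proof.
move=> hX h; apply/ler_addgt0Pr => e he.
case: (leP (X + e) 1) => hXe.
- have hr : sval (clampI (X + e)) = X + e by apply: clamp_id; lra.
  by rewrite -hr; apply: rho_le; apply: h; rewrite hr; lra.
- by apply: le_trans (I_le1 _) _; lra.
Qed.

Lemma part_g2 (Psi : PosetClass) (Hinf : is_Uinflattice Psi le act)
  (psi psi' : A -> Prop) (m m' : A) :
  is_upper le psi -> opsubposet_in Psi le psi -> is_glb le psi m ->
  is_upper le psi' -> opsubposet_in Psi le psi' -> is_glb le psi' m' ->
  sval (rh m m') <= Iinf [set Isup [set sval (rh a b) | b in psi'] | a in psi].
Proof.
move=> hup hpsi hglb hup' hpsi' hglb'.
rewrite /Iinf; destruct (pselect _) as [h|hne]; first exact: I_le1.
apply: lb_le_inf; first by apply/set0P/eqP.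
move=> _ [a ha <-].
have hS : forall z, [set sval (rh a b) | b in psi'] z -> 0 <= z /\ z <= 1.
  by move=> _ [b _ <-]; split; [exact: I_ge0 | exact: I_le1].
have [h0 [_ hub]] := Isup_spec hS.
apply: le_trans (rho_tri m a m') _.
have -> : sval (rh m a) = 0.
  apply/eqP; rewrite eq_le rho_ge0 andbT -(I0_val R); apply: rho_le; apply/part_b.
  by case: hglb => hl _; exact: hl a ha.
rewrite add0r; apply: rho_le_of => // r hr.
apply/(part_g1 Psi Hinf psi' m' hup' hpsi' hglb' r a) => b hb; apply: rho_lt.
by apply: le_lt_trans hr; apply: hub; exists b.
Qed.


Lemma part_e3 (u : Umap R) (mu : I R -> I R) :
  (forall t t' : I R, sval (tsub (u t) (u t')) <= sval (mu (tsub t t'))) ->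
  forall a b, sval (rh (act u a) (act u b)) <= sval (mu (rh a b)).
Proof.
move=> hmu a b; set p := rh a b.
apply/ler_addgt0Pr => e he.
have [d hd0 hd] := UC u he.
pose r := clampI (sval p + d).
have hr1 : sval p <= sval r by apply: clamp_ge; [exact: I_le1 | right; lra].
have hrd : sval r <= sval p + d.
  by apply: clamp_le; right; split; [have := I_ge0 p; lra | exact: lexx].
have hab : ler r a b.
  case: (ltP (sval p) (sval r)) => h; first exact: rho_lt.
  have er : r = I1 R.
    apply: eqI; rewrite I1_val; case: (leP (sval p + d) 1) => h'.
    - by move: h; rewrite /r clamp_id; [lra | have := I_ge0 p; lra | exact: h'].
    - apply/eqP; rewrite eq_le; apply/andP; split; first exact: I_le1.
      by apply: clamp_ge; [exact: lexx | right; lra].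
  by rewrite er; exact: ler_one.
pose s := clampI (sval (mu p) + e).
have hs2 : sval s = sval (mu p) + e \/ sval s = 1.
  rewrite /s clampE; have hm0 := I_ge0 (mu p).
  case: (max_case (sval (mu p) + e)) => [[-> ?]|[-> ?]]; last by exfalso; lra.
  by case: (min_case (sval (mu p) + e)) => [[-> ?]|[-> ?]]; [left | right].
have hs : sval s <= sval (mu p) + e.
  by apply: clamp_le; right; split; [have := I_ge0 (mu p); lra | exact: lexx].
apply: le_trans hs.
apply: rho_le; apply: (part_e r s u u a b _ hab).
move=> t.
set x := tadd t r.
have hx : sval p <= sval x := le_trans hr1 (tadd_ger _ _).
pose y := clampI (sval x - sval p).
have y_val : sval y = sval x - sval p.
  by apply: clamp_id; have := I_le1 x; have := I_ge0 p; lra.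
have exy : tsub x y = p.
  apply: eqI; rewrite tsub_val y_val opprB addrC subrK; apply/max_idPl; exact: I_ge0.
have h1 := hmu x y; rewrite exy tsub_val in h1.
have h2 : sval (u y) <= sval (u t) + e.
  apply: hd; rewrite y_val; have := tadd_le t r; rewrite -/x; lra.
rewrite tadd_val.
have := I_le1 (u x); have := I_ge0 (u t).
case: (max_case (sval (u x) - sval (u y))) => [[hm ?]|[hm ?]]; rewrite hm in h1;
case: hs2 => ->;
try case: (min_case (sval (u t) + (sval (mu p) + e))) => [[-> ?]|[-> ?]];
try case: (min_case (sval (u t) + 1)) => [[-> ?]|[-> ?]]; lra.
Qed.

End Main.

Theorem lemma4p6 (R : realType) (Phi Psi : PosetClass)
  (HPhi : join_doctrine Phi) (HPsi : join_doctrine Psi)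
  (Homega : Phi nat (fun m n => (m <= n)%N))
  (Hdual : sound_dual Phi Psi)
  (A : Type) (le : A -> A -> Prop) (act : Umap R -> A -> A)
  (HA : is_Uposet le act) :
  (* (a) *)
  (forall (r s : I R) (a b : A),
     sval r <= sval s -> le_r le act r a b -> le_r le act s a b) /\
  (* (b) *)
  (forall a b : A, le_r le act (I0 R) a b <-> le a b) /\
  (* (c) *)
  (forall (r s : I R) (a b c : A),
     le_r le act r a b -> le_r le act s b c -> le_r le act (tadd r s) a c) /\
  (* (d) rho is a pseudoquasimetric, dist a pseudometric *)
  (forall a b c : A,
     sval (rho le act a a) = 0 /\
     sval (rho le act a c) <= sval (rho le act a b) + sval (rho le act b c)) /\
  (forall a b c : A,
     dist le act a a = 0 /\ dist le act a b = dist le act b a /\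
     dist le act a c <= dist le act a b + dist le act b c) /\
  (* (e) *)
  (forall (r s : I R) (u v : Umap R) (a b : A),
     (forall t : I R, sval (u (tadd t r)) <= sval (tadd (v t) s)) ->
     le_r le act r a b -> le_r le act s (act u a) (act v b)) /\
  (forall (u v : Umap R) (a : A),
     sval (rho le act (act u a) (act v a))
       <= Isup (range (fun t : I R => sval (tsub (u t) (v t))))) /\
  (forall (u : Umap R) (mu : I R -> I R),
     (forall t t' : I R, sval (tsub (u t) (u t')) <= sval (mu (tsub t t'))) ->
     forall a b : A,
       sval (rho le act (act u a) (act u b)) <= sval (mu (rho le act a b))) /\
  (* (f) *)
  (forall (r s : I R) (u v : Umap R) (a b : A),
     (forall t : I R, sval (uadj u (tadd t r)) <= sval (tadd (v t) s)) ->
     le_r le act r (act u a) b -> le_r le act s a (act v b)) /\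
  (* (g) *)
  (is_Uinflattice Psi le act ->
     (forall (psi : A -> Prop) (m : A),
        is_upper le psi -> opsubposet_in Psi le psi -> is_glb le psi m ->
        forall (r : I R) (a : A),
          le_r le act r a m <-> (forall b, psi b -> le_r le act r a b)) /\
     (forall (psi psi' : A -> Prop) (m m' : A),
        is_upper le psi -> opsubposet_in Psi le psi -> is_glb le psi m ->
        is_upper le psi' -> opsubposet_in Psi le psi' -> is_glb le psi' m' ->
        sval (rho le act m m')
          <= Iinf [set Isup [set sval (rho le act a b) | b in psi'] | a in psi])).

Proof.
split; first by move=> r s a b; exact: part_a.
split; first exact: (part_b _ _ _ _ HA).
split; first by move=> r s a b c; exact: (part_c _ _ _ _ HA).
split; first by move=> a b c; split; [exact: (rho_refl _ _ _ _ HA) | exact: (rho_tri _ _ _ _ HA)].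
split; first by move=> a b c; exact: (dist_props _ _ _ _ HA).
split; first by move=> r s u v a b; exact: (part_e _ _ _ _ HA).
split; first by move=> u v a; exact: (part_e2 _ _ _ _ HA).
split; first by move=> u mu hmu a b; exact: (part_e3 _ _ _ _ HA).
split; first by move=> r s u v a b; exact: (part_f _ _ _ _ HA).
move=> Hinf; split.
- by move=> psi m h1 h2 h3; exact: (part_g1 _ _ _ _ HA _ Hinf).
- by move=> psi psi' m m' h1 h2 h3 h4 h5 h6; exact: (part_g2 _ _ _ _ HA _ Hinf).
Qed.
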